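(* For every instance $I$ of fully-symmetric adversarial multi-agent delegation in which all distributions have finite support, there exists an analogous instance $I'$ of strategic multi-agent delegation such that for every single-proposal mechanism $M'$ for $I'$ and every equilibrium $\sigma'$ induced by $M'$ on $I'$, there exists a single-proposal mechanism $M$ for $I$ with $f_{I,M}=f_{I',M',\sigma'}$.
   Context: Strategic multi-agent delegation: $k$ agents; agent $i$ holds elements $e_{i,1},\dots,e_{i,m_i}$. Each element $e$ has a random outcome $V(e)$ drawn from a distribution over its own outcome set $\Omega(e)$ (disjoint across elements), the $V(e)$ mutually independent; each outcome $\omega$ has principal utility $x(\omega)$ and utility $y(\omega)$ for the agent holding $e$. Each agent's type is the realized outcomes of its elements; a type profile lists all types. A mechanism consists of signal sets $\Sigma_i$ and $g:\Sigma_1\times\dots\times\Sigma_k\to\Omega\cup\{\bot\}$; if $g$ outputs an outcome $\omega$ truly observed by agent $i$, the principal gets $x(\omega)$, agent $i$ gets $y(\omega)$ (agent $i$ wins), others $0$; otherwise all get $0$. Players maximize expected utility, ties broken in favor of the principal; all but realizations is common knowledge; no collusion. An induced equilibrium is a Bayes–Nash equilibrium of the agents under the mechanism. Adversarial multi-agent delegation is the same model without $y$-values, where each agent acts to minimize the principal's expected utility subject to keeping a positive probability of winning. Fully-symmetric: all agents have the same number of elements and all $V(e)$ are identically distributed (as abstract distributions, up to the identification of outcome sets). A strategic instance $I'$ and adversarial instance $I$ are analogous if they coincide up to isomorphism apart from the $y$-values. Single-proposal mechanism: sets $R_i\subseteq\Omega_i$ (outcomes of agent $i$'s elements) and a tie-breaking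 order on elements; each agent proposes one of its elements with its observed outcome; the principal accepts, among proposed outcomes $\omega$ from agents $i$ with $\omega\in R_i$, one maximizing $x(\omega)$ (ties by the order), else rejects. $f_{I',M',\sigma'}$ is the map sending each type profile to the accepted outcome (or $\bot$) under $M'$ with strategies $\sigma'$; $f_{I,M}$ is the same map for adversarial agents under $M$. *)

(* Defs.v *)
From HB Require Import structures.
From mathcomp Require Import all_boot all_order all_algebra.
From mathcomp Require Import reals.
Set Implicit Arguments. Unset Strict Implicit. Unset Printing Implicit Defensive.
Import Order.TTheory GRing.Theory Num.Theory.
Local Open Scope ring_scope.

(* Fully-symmetric instance: k agents, each holding m elements; every element's
   outcome is drawn from the common finite outcome type [Om] with distribution
   [p] (full support) and principal utility [x].  The outcome of element j of
   agent i with realized value w is identified with the triple (i, j, w), so the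
   outcome sets of distinct elements are disjoint. *)

Definition outcome (k m : nat) (Om : finType) := ('I_k * 'I_m * Om)%type.

Definition agent_type (m : nat) (Om : finType) := {ffun 'I_m -> Om}.
Definition profile (k m : nat) (Om : finType) := {ffun 'I_k -> agent_type m Om}.

Definition prof_prob (R : realType) k m (Om : finType) (p : Om -> R)
  (t : profile k m Om) : R := \prod_(i < k) \prod_(j < m) p (t i j).

(* Single-proposal mechanism: acceptance sets R_i (as predicates on agent i's
   outcomes (i, j, w)) and a tie-breaking (strict total) order on elements,
   given by an injective rank. *)
Record SPM (k m : nat) (Om : finType) := {
  accset : 'I_k -> 'I_m -> Om -> bool;
  rank : 'I_k * 'I_m -> nat;
  rank_inj : injective rank }.

Definition strategy (k m : nat) (Om : finType) := 'I_k -> agent_type m Om -> 'I_m.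

Section Mech.
Context (R : realType) (k m : nat) (Om : finType) (x : Om -> R) (M : SPM k m Om).

Definition acceptable (t : profile k m Om) (a : 'I_k -> 'I_m) (i : 'I_k) : bool :=
  accset M i (a i) (t i (a i)).

Definition beats (t : profile k m Om) (a : 'I_k -> 'I_m) (i i2 : 'I_k) : bool :=
  (x (t i2 (a i2)) < x (t i (a i))) ||
  ((x (t i (a i)) == x (t i2 (a i2))) && (rank M (i, a i) < rank M (i2, a i2))%N).

Definition accepted (t : profile k m Om) (a : 'I_k -> 'I_m) : option (outcome k m Om) :=
  match [pick i | acceptable t a i &&
           [forall i2, acceptable t a i2 ==> (i2 == i) || beats t a i i2]] with
  | Some i => Some (i, a i, t i (a i))
  | None => None
  end.

Definition principal_util (o : option (outcome k m Om)) : R :=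
  if o is Some (_, _, w) then x w else 0.

Definition agent_util (y : 'I_k -> 'I_m -> Om -> R) (l : 'I_k)
  (o : option (outcome k m Om)) : R :=
  if o is Some (i, j, w) then (if i == l then y i j w else 0) else 0.

Definition wins (l : 'I_k) (o : option (outcome k m Om)) : bool :=
  if o is Some (i, _, _) then i == l else false.

Definition dev_actions (sigma : strategy k m Om) (t : profile k m Om)
  (l : 'I_k) (b : 'I_m) : 'I_k -> 'I_m :=
  fun i => if i == l then b else sigma i (t i).

Definition outcome_map (sigma : strategy k m Om) (t : profile k m Om) :
  option (outcome k m Om) := accepted t (fun i => sigma i (t i)).

Context (p : Om -> R).

(* interim expectations of agent l of type tau when it plays b, up to the
   positive normalizing factor Pr[tau] *)
Definition interim (sigma : strategy k m Om) (l : 'I_k) (tau : agent_type m Om)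
  (b : 'I_m) (u : option (outcome k m Om) -> R) : R :=
  \sum_(t : profile k m Om | t l == tau)
     prof_prob p t * u (accepted t (dev_actions sigma t l b)).

(* Bayes-Nash equilibrium of strategic agents (utility y), with each agent's
   ties broken in favor of the principal. *)
Definition strategic_eq (y : 'I_k -> 'I_m -> Om -> R) (sigma : strategy k m Om) :
  Prop :=
  forall (l : 'I_k) (tau : agent_type m Om) (b : 'I_m),
    interim sigma l tau b (agent_util y l)
      <= interim sigma l tau (sigma l tau) (agent_util y l) /\
    (interim sigma l tau b (agent_util y l)
       = interim sigma l tau (sigma l tau) (agent_util y l) ->
     interim sigma l tau b principal_util
       <= interim sigma l tau (sigma l tau) principal_util).

Definition adversarial_eq (sigma : strategy k m Om) : Prop :=
  forall (l : 'I_k) (tau : agent_type m Om) (b : 'I_m),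
    0 < interim sigma l tau b (fun o => (wins l o)%:R) ->
    0 < interim sigma l tau (sigma l tau) (fun o => (wins l o)%:R) /\
    interim sigma l tau (sigma l tau) principal_util
      <= interim sigma l tau b principal_util.

End Mech.

(* Main.v *)
Require Import Defs.
From HB Require Import structures.
From mathcomp Require Import all_boot all_order all_algebra.
From mathcomp Require Import reals.
Import Order.TTheory GRing.Theory Num.Theory.
Local Open Scope ring_scope.

Section Aux.
Variables (R : realType) (k m : nat) (Om : finType) (x : Om -> R) (M : SPM k m Om).

Lemma beats_x t a i i2 : beats x M t a i i2 -> x (t i2 (a i2)) <= x (t i (a i)).
Proof. by case/orP => [/ltW // | /andP [/eqP -> _]]. Qed.

Lemma beats_irr t a i : ~~ beats x M t a i i.
Proof. by rewrite /beats ltxx ltnn andbF. Qed.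

Lemma beats_trans t a i j l :
  beats x M t a i j -> beats x M t a j l -> beats x M t a i l.
Proof.
rewrite /beats.
move=> /orP[h1|/andP[/eqP e1 r1]] /orP[h2|/andP[/eqP e2 r2]]; apply/orP.
- by left; apply: lt_trans h2 h1.
- by left; rewrite -e2.
- by left; rewrite e1.
- by right; rewrite e1 e2 eqxx (ltn_trans r1 r2).
Qed.

Lemma beats_total t a i j : i != j -> beats x M t a i j || beats x M t a j i.
Proof.
move=> nij; rewrite /beats.
case: (ltgtP (x (t j (a j))) (x (t i (a i)))) => //= e.
have : rank M (i, a i) != rank M (j, a j).
  apply/negP => /eqP /(rank_inj) [e']; by rewrite e' eqxx in nij.
by rewrite eq_sym; case: ltngtP.
Qed.

Lemma exists_max t a i : acceptable M t a i ->
  exists j, acceptable M t a j &&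
    [forall i2, acceptable M t a i2 ==> (i2 == j) || beats x M t a j i2].
Proof.
move=> Hi.
pose F j := #|[pred i2 | acceptable M t a i2 && beats x M t a i2 j]|.
case: (@arg_minnP _ i (acceptable M t a) F Hi) => j Hj Hmin.
have nb : forall i2, acceptable M t a i2 -> ~~ beats x M t a i2 j.
  move=> i2 Ha2; apply/negP => Hb.
  have : (F i2 < F j)%N.
    apply: proper_card; apply/properP; split.
      apply/subsetP => i3; rewrite !inE => /andP [H3 Hb3].
      by rewrite H3 (beats_trans _ _ _ _ _ Hb3 Hb).
    by exists i2; rewrite !inE ?Ha2 ?Hb ?(negbTE (beats_irr _ _ _)).
  by rewrite ltnNge Hmin.
exists j; rewrite Hj /=; apply/forallP => i2; apply/implyP => Ha2.
case: (eqVneq i2 j) => //= ne.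
by have := beats_total t a i2 j ne; rewrite (negbTE (nb _ Ha2)).
Qed.

Lemma accepted_max t a i : acceptable M t a i ->
  exists j, accepted x M t a = Some (j, a j, t j (a j)) /\ acceptable M t a j /\
    forall i2, acceptable M t a i2 -> x (t i2 (a i2)) <= x (t j (a j)).
Proof.
move=> Hi; rewrite /accepted; case: pickP => [j /andP [Hj /forallP Hall] | Hnone].
  exists j; split => //; split => // i2 H2.
  by have := Hall i2; rewrite H2 /= => /orP [/eqP -> // | /beats_x].
have [j Hj] := exists_max t a i Hi.
by have := Hnone j; rewrite Hj.
Qed.

Lemma accepted_win t a l : wins l (accepted x M t a) ->
  accepted x M t a = Some (l, a l, t l (a l)) /\ acceptable M t a l.
Proof.
rewrite /accepted; case: pickP => [i /andP [Hacc _] | _] //=.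
by move/eqP => e; subst i.
Qed.

Lemma pu_mono t a1 a2 l : (forall i, i != l -> a1 i = a2 i) ->
  acceptable M t a1 l -> acceptable M t a2 l ->
  x (t l (a1 l)) <= x (t l (a2 l)) ->
  principal_util x (accepted x M t a1) <= principal_util x (accepted x M t a2).
Proof.
move=> Hag H1 H2 Hx.
have [j1 [E1 [A1 _]]] := accepted_max t a1 l H1.
have [j2 [E2 [A2 Mx2]]] := accepted_max t a2 l H2.
rewrite E1 E2 /=.
case: (eqVneq j1 l) => [-> | ne].
  by apply: le_trans Hx (Mx2 _ H2).
have e := Hag _ ne.
rewrite e; apply: Mx2.
by move: A1; rewrite /acceptable e.
Qed.

End Aux.

Section Aux2.
Variables (R : realType) (k m : nat) (Om : finType) (x : Om -> R) (M : SPM k m Om)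
  (p : Om -> R) (p_pos : forall w, 0 < p w) (sigma : strategy k m Om)
  (l : 'I_k) (tau : agent_type m Om).

Let W c := interim x M p sigma l tau c (fun o => (wins l o)%:R).

Lemma prob_ge0 (t : profile k m Om) : 0 <= prof_prob p t.
Proof. by apply: prodr_ge0 => i _; apply: prodr_ge0 => j _; apply: ltW. Qed.

Lemma prob_gt0 (t : profile k m Om) : 0 < prof_prob p t.
Proof. by apply: prodr_gt0 => i _; apply: prodr_gt0 => j _. Qed.

Lemma W_ge0 c : 0 <= W c.
Proof. by apply: sumr_ge0 => t _; apply: mulr_ge0; [apply: prob_ge0 | apply: ler0n]. Qed.

Lemma W_le c : W c <= \sum_(t : profile k m Om) prof_prob p t.
Proof.
rewrite /W /interim [X in _ <= X](bigID (fun t : profile k m Om => t l == tau)) /=.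
rewrite -[X in X <= _]addr0; apply: lerD.
  apply: ler_sum => t _; rewrite -[X in _ <= X]mulr1; apply: ler_wpM2l; first exact: prob_ge0.
  by case: wins.
by apply: sumr_ge0 => t _; apply: prob_ge0.
Qed.

Lemma W_pos c : 0 < W c -> exists t : profile k m Om, (t l == tau) /\
   wins l (accepted x M t (dev_actions sigma t l c)) /\ W c >= prof_prob p t.
Proof.
move=> HW.
case: (pickP (fun t : profile k m Om => (t l == tau) && wins l (accepted x M t (dev_actions sigma t l c)))).
  move=> t /andP [Ht Hw]; exists t; split => //; split => //.
  rewrite /W /interim (bigD1 t) //= Hw mulr1 -[X in X <= _]addr0; apply: lerD => //.
  by apply: sumr_ge0 => t' _; apply: mulr_ge0; [apply: prob_ge0 | apply: ler0n].
move=> Hn; exfalso; move: HW; rewrite /W /interim big1 ?ltxx // => t Ht.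
by have := Hn t; rewrite Ht /= => /negbT/negbTE ->; rewrite mulr0.
Qed.

Lemma util_eq (y : 'I_k -> 'I_m -> Om -> R) c :
  interim x M p sigma l tau c (agent_util y l) = y l c (tau c) * W c.
Proof.
rewrite /W /interim mulr_sumr; apply: eq_bigr => t /eqP Ht.
rewrite mulrCA; congr (_ * _).
case E: (wins l (accepted x M t (dev_actions sigma t l c))).
  have [E' _] := accepted_win _ _ _ _ x M t _ l E.
  rewrite E' /agent_util eqxx /dev_actions eqxx Ht mulr1 //.
move: E; rewrite mulr0; case: (accepted _ _ _ _) => [[[i j] w]|] //=.
by move/negbT/negbTE => ->.
Qed.

End Aux2.

Theorem mainTheorem9 (R : realType) (k m : nat) (Om : finType)
  (p : Om -> R) (x : Om -> R)
  (p_pos : forall w, 0 < p w) (p_sum : \sum_(w : Om) p w = 1) :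
  exists y : 'I_k -> 'I_m -> Om -> R,
    forall (M' : SPM k m Om) (sigma' : strategy k m Om),
      strategic_eq x M' p y sigma' ->
      exists (M : SPM k m Om) (sigma : strategy k m Om),
        adversarial_eq x M p sigma /\
        forall t : profile k m Om,
          outcome_map x M sigma t = outcome_map x M' sigma' t.
Proof.
have p_le1 : forall w, p w <= 1.
  move=> w; rewrite -p_sum (bigD1 w) //= lerDl.
  by apply: sumr_ge0 => w' _; apply: ltW.
have prob_le1 : forall t : profile k m Om, prof_prob p t <= 1.
  move=> t; apply: prodr_ile1 => i _; apply/andP; split.
    by apply: prodr_ge0 => j _; apply: ltW.
  by apply: prodr_ile1 => j _; rewrite p_le1 andbT ltW.
pose S := \sum_(t : profile k m Om) prof_prob p t.
pose d := \prod_(t : profile k m Om) prof_prob p t.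
have d_pos : 0 < d by apply: prodr_gt0 => t _; exact: (prob_gt0 R k m Om p p_pos).
have d_le : forall t : profile k m Om, d <= prof_prob p t.
  move=> t; rewrite /d (bigD1 t) //=; apply: ler_piMr; first exact: (prob_ge0 R k m Om p p_pos).
  by apply: prodr_ile1 => t' _; rewrite prob_le1 andbT (prob_ge0 R k m Om p p_pos).
have S_ge0 : 0 <= S by apply: sumr_ge0 => t _; exact: (prob_ge0 R k m Om p p_pos).
pose c := S / d + 1.
have cd : c * d = S + d by rewrite /c mulrDl mul1r divfK // gt_eqF.
have c_ge1 : 1 <= c by rewrite /c lerDr divr_ge0 // ltW.
pose n w := #|[pred w' | x w < x w']|.
pose yv w := c ^+ n w.
have y_pos : forall w, 0 < yv w.
  by move=> w; apply: exprn_gt0; apply: lt_le_trans c_ge1.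
have ylex : forall w1 w2, x w1 < x w2 -> c * yv w2 <= yv w1.
  move=> w1 w2 Hlt; rewrite /yv -exprS; apply: ler_weXn2l => //.
  apply: proper_card; apply/properP; split.
    by apply/subsetP => w'; rewrite !inE => H; apply: lt_trans Hlt H.
  by exists w2; rewrite !inE ?Hlt ?ltxx.
exists (fun _ _ w => yv w) => M' sigma' Heq.
exists M', sigma'; split => //.
move=> l tau b HWb.
have [H1 H2] := Heq l tau b.
rewrite !(util_eq R k m Om x M' p sigma' l tau) in H1.
set a := sigma' l tau in H1 H2 *.
set Wb := interim x M' p sigma' l tau b _ in HWb H1 *.
set Wa := interim x M' p sigma' l tau a _ in H1 *.
have [tb [Htb [Hwb Hgeb]]] := W_pos R k m Om x M' p p_pos sigma' l tau b HWb.
have HWa : 0 < Wa.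
  rewrite -(pmulr_rgt0 _ (y_pos (tau a))); apply: lt_le_trans H1.
  by apply: mulr_gt0 => //; apply: y_pos.
have [ta [Hta [Hwa _]]] := W_pos R k m Om x M' p p_pos sigma' l tau a HWa.
split => //.
have Hx : x (tau a) <= x (tau b).
  rewrite leNgt; apply/negP => Hlt.
  have hy := ylex _ _ Hlt.
  have dWb : d <= Wb := le_trans (d_le tb) Hgeb.
  have WaS : Wa <= S := W_le R k m Om x M' p p_pos sigma' l tau a.
  have ya := y_pos (tau a); have yb := y_pos (tau b).
  have e1 : yv (tau a) * Wa <= yv (tau a) * S by apply: ler_wpM2l => //; apply: ltW.
  have e2 : yv (tau a) * S < yv (tau a) * (c * d).
    by rewrite cd ltr_pM2l // ltrDl.
  have e3 : yv (tau a) * (c * d) <= yv (tau b) * d.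
    by rewrite mulrA (mulrC _ c) ler_wpM2r // ltW.
  have e4 : yv (tau b) * d <= yv (tau b) * Wb by apply: ler_wpM2l => //; apply: ltW.
  have := le_lt_trans H1 (lt_le_trans (le_lt_trans e1 e2) (le_trans e3 e4)).
  by rewrite ltxx.
have accE : forall (t : profile k m Om) cc,
    acceptable M' t (dev_actions sigma' t l cc) l = accset M' l cc (t l cc).
  by move=> t cc; rewrite /acceptable /dev_actions eqxx.
have [_ Aa] := accepted_win R k m Om x M' ta (dev_actions sigma' ta l a) l Hwa.
have [_ Ab] := accepted_win R k m Om x M' tb (dev_actions sigma' tb l b) l Hwb.
rewrite accE (eqP Hta) in Aa; rewrite accE (eqP Htb) in Ab.
rewrite /interim; apply: ler_sum => t /eqP Ht.
apply: ler_wpM2l; first exact: (prob_ge0 R k m Om p p_pos).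
apply: (pu_mono R k m Om x M' t _ _ l).
- by move=> i ne; rewrite /dev_actions (negbTE ne).
- by rewrite /acceptable /dev_actions eqxx Ht.
- by rewrite /acceptable /dev_actions eqxx Ht.
- by rewrite /dev_actions eqxx Ht.
Qed.
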